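(* In the setting described in the context, if $\alpha'(0)=0$, then $\gamma$ is a circle centered at the origin.
   Context: Setting: $\mathbb{R}^2$ in polar coordinates $(r,\theta)$ with Riemannian metric $ds^2=dr^2+h(r)^2d\theta^2$ ($h$ smooth, $h>0$ on $(0,\infty)$) and smooth positive radial density $f(r)=e^{\psi(r)}$; area and length are weighted by $f$. Let $A$ be an isoperimetric region (it minimizes weighted length of boundary among regions of the same weighted area) which is spherically symmetrized: for each $r>0$, $A\cap\{|x|=r\}$ is empty, the whole circle, or a closed arc of that circle symmetric about the ray $\theta=0$. Let $\gamma:[-\beta,\beta]\to\mathbb{R}^2$ be a smooth, counterclockwise, arclength (with respect to $ds$) parametrization of the component of $\partial A$ farthest from the origin, such that $\gamma(0)$ and $\gamma(\beta)=\gamma(-\beta)$ lie on the $x$-axis, $\gamma$ is symmetric about the $x$-axis, lies above the $x$-axis on $(0,\beta)$ and below it on $(-\beta,0)$, and $\gamma(0)$ is a point of $\gamma$ farthest from the origin. Write $\gamma(t)=(r(t),\theta(t))$. Let $\alpha(t)$ be the counterclockwise angle, measured in $ds$, from the unit radial vector $\hat r(t)$ at $\gamma(t)$ to $\gamma'(t)$, chosen continuously in $t$ with $\alpha(0)\in[0,2\pi)$. The generalized curvature $\kappa_f=\kappa+\partial\psi/\partial\nu$ ($\kappa$ the inward geodesic curvature, $\nu$ the outward unit normal) is constant along $\gamma$ since $A$ is isoperimetric, and equals $(\log fh)'(r(t))\sin\alpha(t)+\alpha'(t)$. *)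

(* Defs.v *)
From Stdlib Require Import Reals.
From Coquelicot Require Import Coquelicot.
Open Scope R_scope.

Definition smooth_on (D : R -> Prop) (f : R -> R) : Prop :=
  forall (n : nat) (x : R), D x -> ex_derive_n f n x.

Definition density (psi : R -> R) : R -> R := fun s => exp (psi s).

Definition dlog_fh (psi h : R -> R) (s : R) : R :=
  Derive (fun u => ln (density psi u * h u)) s.

(* Main.v *)
From Stdlib Require Import Reals Lra.
From Coquelicot Require Import Coquelicot.
Require Import Defs.
Open Scope R_scope.
Definition G (psi h : R -> R) s := Derive psi s + Derive h s / h s.
Definition dG (psi h : R -> R) s := Derive_n psi 2 s + (Derive_n h 2 s * h s - Derive h s * Derive h s)/ (h s * h s).

Lemma G_eq (psi h : R -> R) (s : R) : ex_derive psi s -> ex_derive h s -> 0 < h s -> dlog_fh psi h s = G psi h s.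
Proof.
intros H1 H2 H3. unfold dlog_fh, density, G. apply is_derive_unique.
auto_derive. repeat split; auto. apply Rmult_lt_0_compat; auto. apply exp_pos.
change (fun x : R => psi x) with psi. change (fun x : R => h x) with h.
field. split; [lra| apply Rgt_not_eq, exp_pos].
Qed.

Lemma G_der (psi h : R -> R) (s : R) : ex_derive_n psi 2 s -> ex_derive_n h 2 s -> ex_derive h s -> 0 < h s ->
  is_derive (G psi h) s (dG psi h s).
Proof.
intros H1 H2 H3 H4. unfold G, dG.
auto_derive.
- repeat split; auto; try lra.
- change (Derive_n psi 2 s) with (Derive (fun x => Derive psi x) s).
  change (Derive_n h 2 s) with (Derive (fun x => Derive h x) s).
  change (fun x : R => h x) with h. field. lra.
Qed.

Lemma dG_ex (psi h : R -> R) (s : R) : ex_derive_n psi 3 s -> ex_derive_n h 3 s -> ex_derive_n h 2 s -> ex_derive h s -> 0 < h s ->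
  ex_derive (dG psi h) s.
Proof.
intros H1 H2 H3 H4 H5. unfold dG.
auto_derive. repeat split; first [exact H1|exact H2|exact H3|exact H4|apply Rgt_not_eq; nra].
Qed.

Lemma cont_of_ex (f : R -> R) x : ex_derive f x -> continuity_pt f x.
Proof. intro H. apply continuity_pt_filterlim. exact (ex_derive_continuous f x H). Qed.

Lemma lip_gen (F dF : R -> R) (m M : R) : m <= M ->
  (forall x, m <= x <= M -> is_derive F x (dF x)) ->
  (forall x, m <= x <= M -> continuity_pt dF x) ->
  exists K, 0 <= K /\ forall x y, m <= x <= M -> m <= y <= M -> Rabs (F x - F y) <= K * Rabs (x - y).
Proof.
intros Hm HD HC.
destruct (continuity_ab_maj (fun x => Rabs (dF x)) m M Hm) as [Mx [HMx HMxi]].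
{ intros c Hc. apply continuity_pt_filterlim. apply continuous_comp.
  apply continuity_pt_filterlim. apply HC; auto. apply continuous_Rabs. }
exists (Rabs (dF Mx)). split. apply Rabs_pos.
intros x y Hx Hy.
destruct (MVT_gen F y x dF) as [c [Hc Heq]].
{ intros z Hz. apply HD. split.
  apply Rle_trans with (Rmin y x). apply Rmin_glb; lra. lra.
  apply Rle_trans with (Rmax y x). lra. apply Rmax_lub; lra. }
{ intros z Hz. apply cont_of_ex. eexists. apply HD. split.
  apply Rle_trans with (Rmin y x). apply Rmin_glb; lra. lra.
  apply Rle_trans with (Rmax y x). lra. apply Rmax_lub; lra. }
rewrite Heq, Rabs_mult. apply Rmult_le_compat_r. apply Rabs_pos.
apply HMx. split.
  apply Rle_trans with (Rmin y x). apply Rmin_glb; lra. lra.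
  apply Rle_trans with (Rmax y x). lra. apply Rmax_lub; lra.
Qed.

Lemma sin_lip a b : Rabs (sin a - sin b) <= Rabs (a - b).
Proof.
destruct (MVT_gen sin b a cos) as [c [Hc Heq]].
{ intros z _. apply is_derive_Reals. apply derivable_pt_lim_sin. }
{ intros z _. apply continuity_sin. }
rewrite Heq, Rabs_mult. rewrite <- (Rmult_1_l (Rabs (a - b))) at 2.
apply Rmult_le_compat_r. apply Rabs_pos. apply Rabs_le. apply COS_bound.
Qed.

Lemma cos_lip a b : Rabs (cos a - cos b) <= Rabs (a - b).
Proof.
destruct (MVT_gen cos b a (fun x => - sin x)) as [c [Hc Heq]].
{ intros z _. apply is_derive_Reals. apply derivable_pt_lim_cos. }
{ intros z _. apply continuity_cos. }
rewrite Heq, Rabs_mult. rewrite <- (Rmult_1_l (Rabs (a - b))) at 2.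
apply Rmult_le_compat_r. apply Rabs_pos. rewrite Rabs_Ropp. apply Rabs_le. apply SIN_bound.
Qed.

Lemma key_bound u v cu dv K M : Rabs cu <= Rabs v -> Rabs dv <= K*Rabs u + M*Rabs v -> 0<=K -> 0<=M ->
  2*u*cu + 2*v*dv <= (1+K+2*M)*(u^2+v^2).
Proof.
intros H1 H2 HK HM.
assert (A1 : u*cu <= Rabs u * Rabs cu) by (rewrite <- Rabs_mult; apply Rle_abs).
assert (A2 : v*dv <= Rabs v * Rabs dv) by (rewrite <- Rabs_mult; apply Rle_abs).
rewrite <- (pow2_abs u), <- (pow2_abs v).
assert (0 <= Rabs u) by apply Rabs_pos. assert (0 <= Rabs v) by apply Rabs_pos.
assert (0 <= Rabs cu) by apply Rabs_pos. assert (0 <= Rabs dv) by apply Rabs_pos.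
assert (Rabs u * Rabs cu <= Rabs u * Rabs v) by (apply Rmult_le_compat_l; auto).
assert (Rabs v * Rabs dv <= Rabs v * (K*Rabs u + M*Rabs v)) by (apply Rmult_le_compat_l; auto).
assert (0 <= K * (Rabs u - Rabs v)^2) by (apply Rmult_le_pos; auto; apply pow2_ge_0).
assert (0 <= M * (Rabs u)^2) by (apply Rmult_le_pos; auto; apply pow2_ge_0).
assert (0 <= (Rabs u - Rabs v)^2) by apply pow2_ge_0.
nra.
Qed.

Lemma dv_bound a b s0 sn K u v r0 : Rabs (a - b) <= K * Rabs u -> Rabs u <= r0 -> 0 <= K ->
  Rabs s0 = 1 -> Rabs (s0 - sn) <= Rabs v ->
  Rabs (a*s0 - b*sn) <= K * Rabs u + (Rabs a + K*r0) * Rabs v.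
Proof.
intros H1 H2 HK H3 H4.
replace (a*s0 - b*sn) with ((a-b)*s0 + b*(s0-sn)) by ring.
eapply Rle_trans. apply Rabs_triang. rewrite !Rabs_mult, H3, Rmult_1_r.
apply Rplus_le_compat. exact H1.
assert (Hb : Rabs b <= Rabs a + K*r0).
{ replace b with (a - (a - b)) by ring. eapply Rle_trans. apply Rabs_triang.
  rewrite Rabs_Ropp. apply Rplus_le_compat_l. eapply Rle_trans. exact H1.
  apply Rmult_le_compat_l; auto. }
apply Rmult_le_compat; auto; apply Rabs_pos.
Qed.

Theorem lemma5p1
  (h psi : R -> R) (beta : R) (r theta alpha : R -> R) :
  smooth_on (fun s => 0 < s) h ->
  (forall s, 0 < s -> 0 < h s) ->
  smooth_on (fun s => 0 < s) psi ->
  0 < beta ->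
  smooth_on (fun t => -beta <= t <= beta) r ->
  smooth_on (fun t => -beta <= t <= beta) theta ->
  (forall t, -beta <= t <= beta -> 0 < r t) ->
  (forall t, -beta <= t <= beta ->
     (Derive r t) ^ 2 + (h (r t)) ^ 2 * (Derive theta t) ^ 2 = 1) ->
  sin (theta 0) = 0 ->
  sin (theta beta) = 0 ->
  (forall t, -beta <= t <= beta ->
     r (- t) = r t /\ cos (theta (- t)) = cos (theta t)
     /\ sin (theta (- t)) = - sin (theta t)) ->
  (forall t, 0 < t < beta -> 0 < r t * sin (theta t)) ->
  (forall t, - beta < t < 0 -> r t * sin (theta t) < 0) ->
  (forall t, -beta <= t <= beta -> r t <= r 0) ->
  smooth_on (fun t => -beta <= t <= beta) alpha ->
  (forall t, -beta <= t <= beta ->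
     Derive r t = cos (alpha t) /\ h (r t) * Derive theta t = sin (alpha t)) ->
  0 <= alpha 0 < 2 * PI ->
  (exists kf : R, forall t, -beta <= t <= beta ->
     dlog_fh psi h (r t) * sin (alpha t) + Derive alpha t = kf) ->
  Derive alpha 0 = 0 ->
  exists R0 : R, 0 < R0 /\ forall t, -beta <= t <= beta -> r t = R0.
Proof.
intros Hh Hhpos Hpsi Hb Hr Hth Hrpos Harc Hs0 Hsb Hsym Hup Hdown Hmax Hal Hdir Ha0 [kf Hkf] Hda0.
set (r0 := r 0). set (a0 := alpha 0).
assert (I0 : -beta <= 0 <= beta) by lra.
assert (Exr : forall t, -beta <= t <= beta -> ex_derive r t) by (intros t Ht; exact (Hr 1%nat t Ht)).
assert (Exa : forall t, -beta <= t <= beta -> ex_derive alpha t) by (intros t Ht; exact (Hal 1%nat t Ht)).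
assert (Hr0 : 0 < r0) by (apply Hrpos; lra).
assert (Dr0 : Derive r 0 = 0).
{ pose (pr := exist (fun l => derivable_pt_lim r 0 l) (Derive r 0)
     (proj1 (is_derive_Reals _ _ _) (Derive_correct _ _ (Exr 0 I0)))).
  change (Derive r 0) with (derive_pt r 0 pr).
  apply (deriv_maximum r (-beta) beta 0 pr); try lra.
  intros x H1 H2. apply Hmax; lra. }
assert (Hc0 : cos a0 = 0) by (unfold a0; rewrite <- (proj1 (Hdir 0 I0)); exact Dr0).
set (s0 := sin a0).
assert (Hs0a : Rabs s0 = 1).
{ assert (E := sin2_cos2 a0). rewrite Hc0 in E. unfold Rsqr in E.
  assert (s0 * s0 = 1) by (unfold s0; lra).
  destruct (Rle_or_lt 0 s0).
  - rewrite Rabs_right by lra. nra.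
  - rewrite Rabs_left by lra. nra. }
destruct (continuity_ab_min r 0 beta) as [mx [Hmx Hmxi]]. lra.
{ intros c Hc. apply cont_of_ex. apply Exr. lra. }
set (m := r mx).
assert (Hm : 0 < m) by (apply Hrpos; lra).
assert (Hmr0 : m <= r0) by (apply Hmx; lra).
destruct (lip_gen (G psi h) (dG psi h) m r0 Hmr0) as [K [HK HL]].
{ intros x Hx. apply G_der; [apply Hpsi; lra | apply Hh; lra | exact (Hh 1%nat x ltac:(lra)) | apply Hhpos; lra]. }
{ intros x Hx. apply cont_of_ex. apply dG_ex; [apply Hpsi; lra | apply Hh; lra | apply Hh; lra | exact (Hh 1%nat x ltac:(lra)) | apply Hhpos; lra]. }
assert (Hg : forall t, 0 <= t <= beta -> dlog_fh psi h (r t) = G psi h (r t)).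
{ intros t Ht. assert (0 < r t) by (apply Hrpos; lra).
  apply G_eq; [exact (Hpsi 1%nat _ H) | exact (Hh 1%nat _ H) | apply Hhpos; auto]. }
assert (Hkf0 : kf = G psi h r0 * s0).
{ rewrite <- (Hkf 0 I0), Hda0, Hg by lra. unfold s0, a0, r0. ring. }
set (M := Rabs (G psi h r0) + K * r0).
assert (HM : 0 <= M) by (unfold M; assert (0 <= Rabs (G psi h r0)) by apply Rabs_pos; nra).
set (C := 1 + K + 2*M).
set (F := fun t => ((r t - r0)^2 + (alpha t - a0)^2) * exp (- (C * t))).
set (dF := fun t => (2*(r t - r0)*Derive r t + 2*(alpha t - a0)*Derive alpha t
                     - C*((r t - r0)^2 + (alpha t - a0)^2)) * exp (- (C * t))).
assert (HdF : forall t, -beta <= t <= beta -> is_derive F t (dF t)).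
{ intros t Ht. unfold F, dF. auto_derive.
  - split; [apply Exr; auto | split; [apply Exa; auto | exact I]].
  - change (fun x : R => r x) with r. change (fun x : R => alpha x) with alpha. ring. }
assert (HdFn : forall t, 0 <= t <= beta -> dF t <= 0).
{ intros t Ht. assert (Itb : -beta <= t <= beta) by lra.
  unfold dF. rewrite <- (Rmult_0_l (exp (- (C * t)))).
  apply Rmult_le_compat_r. left; apply exp_pos.
  assert (Hrt : 0 < r t) by (apply Hrpos; lra).
  assert (Hrt2 : r t <= r0) by (apply Hmax; lra).
  assert (Hrt3 : m <= r t) by (apply Hmx; lra).
  assert (Hu : Rabs (r t - r0) <= r0) by (rewrite Rabs_left1 by lra; lra).
  assert (Hda : Derive alpha t = G psi h r0 * s0 - G psi h (r t) * sin (alpha t)).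
  { rewrite <- Hkf0, <- (Hkf t Itb), Hg by lra. ring. }
  rewrite Hda, (proj1 (Hdir t Itb)).
  assert (B1 : Rabs (cos (alpha t)) <= Rabs (alpha t - a0)).
  { rewrite <- (Rminus_0_r (cos (alpha t))), <- Hc0. apply cos_lip. }
  assert (B2 : Rabs (G psi h r0 * s0 - G psi h (r t) * sin (alpha t))
               <= K * Rabs (r t - r0) + M * Rabs (alpha t - a0)).
  { apply dv_bound; auto.
    - replace (r t - r0) with (-(r0 - r t)) by ring. rewrite Rabs_Ropp. apply HL; lra.
    - unfold s0. rewrite <- Rabs_Ropp. replace (- (sin a0 - sin (alpha t))) with (sin (alpha t) - sin a0) by ring.
      apply sin_lip. }
  assert (Kb := key_bound _ _ _ _ K M B1 B2 HK HM). fold C in Kb. lra. }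
assert (HF0 : F 0 = 0) by (unfold F; fold r0 a0; replace (r0 - r0) with 0 by ring; replace (a0 - a0) with 0 by ring; ring).
assert (Hpos : forall t, 0 <= t <= beta -> r t = r0).
{ intros t Ht. destruct (Req_dec t 0) as [->|Hne]; [reflexivity|].
  destruct (MVT_gen F 0 t dF) as [c [Hc Heq]].
  { intros z Hz. apply HdF. rewrite Rmin_left, Rmax_right in Hz by lra. lra. }
  { intros z Hz. apply cont_of_ex. eexists. apply HdF. rewrite Rmin_left, Rmax_right in Hz by lra. lra. }
  rewrite Rmin_left, Rmax_right in Hc by lra.
  assert (dF c <= 0) by (apply HdFn; lra).
  rewrite HF0 in Heq.
  assert (F t <= 0) by nra.
  unfold F in H0.
  assert (Hex := exp_pos (- (C * t))).
  assert (E1 : (r t - r0) ^ 2 + (alpha t - a0) ^ 2 <= 0).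
  { destruct (Rle_or_lt ((r t - r0) ^ 2 + (alpha t - a0) ^ 2) 0); auto. nra. }
  assert (0 <= (alpha t - a0)^2) by apply pow2_ge_0.
  assert (0 <= (r t - r0)^2) by apply pow2_ge_0.
  assert ((r t - r0)^2 = 0) by lra. nra. }
exists r0. split; auto.
intros t Ht. destruct (Rle_or_lt 0 t).
- apply Hpos; lra.
- rewrite <- (proj1 (Hsym t Ht)). apply Hpos; lra.
Qed.
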